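(* Let $r,s\in\widetilde{\mathbb{K}}_{sm}$. Then (i) $r\widetilde{\mathbb{K}}_{sm}+s\widetilde{\mathbb{K}}_{sm}=(|r|+|s|)\widetilde{\mathbb{K}}_{sm}=(|r|\vee|s|)\widetilde{\mathbb{K}}_{sm}$; (ii) $r\widetilde{\mathbb{K}}_{sm}\cap s\widetilde{\mathbb{K}}_{sm}=(|r|\wedge|s|)\widetilde{\mathbb{K}}_{sm}$.
   Context: Let $I=(0,1]$ and $\mathbb{K}\in\{\mathbb{R},\mathbb{C}\}$. $\widetilde{\mathbb{K}}_{sm}=\mathcal{E}_{M,sm}/\mathcal{N}_{sm}$ where $\mathcal{E}_{M,sm}$ is the set of nets $(r_\varepsilon)_{\varepsilon\in I}\in\mathbb{K}^I$ smooth in $\varepsilon$ with $|r_\varepsilon|=O(\varepsilon^{-N})$ for some $N$, and $\mathcal{N}_{sm}$ those with $|r_\varepsilon|=O(\varepsilon^m)$ for all $m$; $\widetilde{\mathbb{K}}_{co}$ is defined analogously with continuous nets, and $\tau_{sm}:\widetilde{\mathbb{K}}_{sm}\to\widetilde{\mathbb{K}}_{co}$, $[(r_\varepsilon)]\mapsto[(r_\varepsilon)]$, is a ring isomorphism. For $r=[(r_\varepsilon)_\varepsilon]$, $|r|:=\tau_{sm}^{-1}([(|r_\varepsilon|)_\varepsilon])\in\widetilde{\mathbb{R}}_{sm}\subseteq\widetilde{\mathbb{K}}_{sm}$. For $a,b\in\widetilde{\mathbb{R}}_{sm}$: $a\vee b=\tau_{sm}^{-1}([(\max(a_\varepsilon,b_\varepsilon))_\varepsilon])$,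 $a\wedge b=\tau_{sm}^{-1}([(\min(a_\varepsilon,b_\varepsilon))_\varepsilon])$. *)

(* Defs.v *)
From Stdlib Require Import Reals.
From Coquelicot Require Import Coquelicot.
Open Scope R_scope.

Inductive Kfield := KR | KC.

(** A net (r_eps)_{eps in I}, I = (0,1], with values in C; values outside I
    only serve as a smooth extension beyond eps = 1. *)
Definition net := R -> C.

(** C^infinity on (0,1]: infinitely differentiable on an open interval
    (0, 1+d) containing I. *)
Definition smoothR (f : R -> R) : Prop :=
  exists d : R, 0 < d /\ forall (n : nat) (x : R), 0 < x < 1 + d -> ex_derive_n f n x.

Definition smooth_net (u : net) : Prop :=
  smoothR (fun e => Re (u e)) /\ smoothR (fun e => Im (u e)).

Definition K_valued (K : Kfield) (u : net) : Prop :=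
  match K with
  | KC => True
  | KR => forall e, 0 < e <= 1 -> Im (u e) = 0
  end.

Definition moderate (u : net) : Prop :=
  exists (N : nat) (M e0 : R), 0 < e0 <= 1 /\
    forall e, 0 < e <= e0 -> Cmod (u e) <= M * / (e ^ N).

Definition negligible (u : net) : Prop :=
  forall m : nat, exists (M e0 : R), 0 < e0 <= 1 /\
    forall e, 0 < e <= e0 -> Cmod (u e) <= M * e ^ m.

Definition EMsm (K : Kfield) (u : net) : Prop :=
  K_valued K u /\ smooth_net u /\ moderate u.

(** equality in the quotient K~_sm = E_{M,sm}/N_sm *)
Definition net_eq (u v : net) : Prop := negligible (fun e => (u e - v e)%C).

(** a is a representative of |r| = tau_sm^{-1}([(|r_eps|)]) in R~_sm *)
Definition is_abs (r a : net) : Prop :=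
  EMsm KR a /\ net_eq a (fun e => RtoC (Cmod (r e))).

(** m represents a \/ b = tau_sm^{-1}([(max(a_eps,b_eps))]) *)
Definition is_max (a b m : net) : Prop :=
  EMsm KR m /\ net_eq m (fun e => RtoC (Rmax (Re (a e)) (Re (b e)))).

(** m represents a /\ b = tau_sm^{-1}([(min(a_eps,b_eps))]) *)
Definition is_min (a b m : net) : Prop :=
  EMsm KR m /\ net_eq m (fun e => RtoC (Rmin (Re (a e)) (Re (b e)))).

Definition in_principal (K : Kfield) (g x : net) : Prop :=
  exists c, EMsm K c /\ net_eq x (fun e => (g e * c e)%C).

Definition in_sum_ideal (K : Kfield) (r s x : net) : Prop :=
  exists c d, EMsm K c /\ EMsm K d /\
    net_eq x (fun e => (r e * c e + s e * d e)%C).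

Definition net_add (u v : net) : net := fun e => (u e + v e)%C.

(* Main.v *)
Require Import Defs.
From Stdlib Require Import Reals Lra Lia.
From Coquelicot Require Import Coquelicot.
Open Scope R_scope.

Fixpoint Sm (n : nat) (D : R -> Prop) (f : R -> R) : Prop :=
  match n with
  | O => True
  | S n => (forall x, D x -> ex_derive f x) /\ Sm n D (fun x => Derive f x)
  end.

Lemma Sm_S_weak : forall n D f, Sm (S n) D f -> Sm n D f.
Proof.
  induction n; intros D f H; simpl in *; auto.
  destruct H as [H1 H2]. split; auto.
Qed.

Lemma Sm_ext : forall n D f g, open D -> (forall x, D x -> f x = g x) -> Sm n D f -> Sm n D g.
Proof.
  induction n; intros D f g HD He H; simpl in *; auto.
  destruct H as [H1 H2]. split.
  - intros x Hx. apply (ex_derive_ext_loc f). 2: now apply H1.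
    generalize (HD x Hx). apply filter_imp. intros y Hy. now apply He.
  - apply (IHn D (fun x => Derive f x)); auto.
    intros x Hx. apply Derive_ext_loc.
    generalize (HD x Hx). apply filter_imp. intros y Hy. now apply He.
Qed.

Lemma Sm_const : forall n D c, open D -> Sm n D (fun _ => c).
Proof.
  induction n; intros; simpl; auto. split.
  - intros; apply ex_derive_const.
  - apply Sm_ext with (f := fun _ => 0); auto.
    intros; now rewrite Derive_const.
Qed.

Lemma Sm_id : forall n D, open D -> Sm n D (fun x => x).
Proof.
  destruct n; intros; simpl; auto. split.
  - intros; apply ex_derive_id.
  - apply Sm_ext with (f := fun _ => 1); auto. 2: apply Sm_const; auto.
    intros. symmetry. apply (Derive_id x).
Qed.

Lemma Sm_plus : forall n D f g, open D -> Sm n D f -> Sm n D g -> Sm n D (fun x => f x + g x).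
Proof.
  induction n; intros D f g HD Hf Hg; simpl in *; auto.
  destruct Hf as [Hf1 Hf2], Hg as [Hg1 Hg2]. split.
  - intros x Hx. apply (ex_derive_plus f g); auto.
  - apply Sm_ext with (f := fun x => Derive f x + Derive g x); auto.
    intros x Hx. rewrite Derive_plus; auto.
Qed.

Lemma Sm_opp : forall n D f, open D -> Sm n D f -> Sm n D (fun x => - f x).
Proof.
  induction n; intros D f HD Hf; simpl in *; auto.
  destruct Hf as [Hf1 Hf2]. split.
  - intros x Hx. apply (ex_derive_opp f); auto.
  - apply Sm_ext with (f := fun x => - Derive f x); auto.
    intros x Hx. rewrite Derive_opp; auto.
Qed.

Lemma Sm_mult : forall n D f g, open D -> Sm n D f -> Sm n D g -> Sm n D (fun x => f x * g x).
Proof.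
  induction n; intros D f g HD Hf Hg; simpl; auto.
  assert (Hf' := Hf). assert (Hg' := Hg).
  apply Sm_S_weak in Hf'. apply Sm_S_weak in Hg'.
  destruct Hf as [Hf1 Hf2], Hg as [Hg1 Hg2]. split.
  - intros x Hx. apply ex_derive_mult; auto.
  - apply Sm_ext with (f := fun x => Derive f x * g x + f x * Derive g x); auto.
    + intros x Hx. rewrite Derive_mult; auto.
    + apply Sm_plus; auto.
Qed.

Lemma Sm_inv : forall n D f, open D -> (forall x, D x -> f x <> 0) -> Sm n D f -> Sm n D (fun x => / f x).
Proof.
  induction n; intros D f HD Hnz Hf; simpl; auto.
  assert (Hf' := Hf). apply Sm_S_weak in Hf'.
  destruct Hf as [Hf1 Hf2]. split.
  - intros x Hx. apply ex_derive_inv; auto.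
  - apply Sm_ext with (f := fun x => - Derive f x * ((/ f x) * (/ f x))); auto.
    + intros x Hx. rewrite Derive_inv; auto. simpl. field. auto.
    + apply Sm_mult; auto. apply Sm_opp; auto. apply Sm_mult; auto.
Qed.

Lemma Derive_exp_comp : forall f x, ex_derive f x -> Derive (fun y => exp (f y)) x = Derive f x * exp (f x).
Proof.
  intros f x H. apply is_derive_unique.
  exact (is_derive_comp exp f x (exp (f x)) (Derive f x) (is_derive_exp _) (Derive_correct _ _ H)).
Qed.

Lemma Sm_exp : forall n D f, open D -> Sm n D f -> Sm n D (fun x => exp (f x)).
Proof.
  induction n; intros D f HD Hf; simpl; auto.
  assert (Hf' := Hf). apply Sm_S_weak in Hf'.
  destruct Hf as [Hf1 Hf2]. split.
  - intros x Hx. apply (ex_derive_comp exp f); auto.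
    eexists; apply is_derive_exp.
  - apply (Sm_ext n D (fun x => Derive f x * exp (f x))). exact HD.
    + intros x Hx. symmetry. now apply Derive_exp_comp, Hf1.
    + apply Sm_mult; auto.
Qed.

Lemma Dn_S : forall f k x, Derive_n f (S k) x = Derive_n (Derive f) k x.
Proof.
  intros f k; induction k; intros x. reflexivity.
  change (Derive (Derive_n f (S k)) x = Derive (Derive_n (Derive f) k) x).
  apply Derive_ext. exact IHk.
Qed.

Lemma exn_S : forall f k x, ex_derive_n f (S (S k)) x <-> ex_derive_n (Derive f) (S k) x.
Proof.
  intros.
  change (ex_derive (Derive_n f (S k)) x <-> ex_derive (Derive_n (Derive f) k) x).
  split; apply ex_derive_ext; intros t.
  - apply (Dn_S f k t).
  - symmetry; apply (Dn_S f k t).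
Qed.

Lemma exn_of_Sm : forall n D f, Sm n D f -> forall x, D x -> ex_derive_n f n x.
Proof.
  induction n; intros D f H x Hx. exact I.
  destruct n. change (ex_derive f x). now apply H.
  apply exn_S. destruct H as [H1 H2]. eapply IHn; eauto.
Qed.

Lemma Sm_of_exn : forall n D f, (forall k x, D x -> ex_derive_n f k x) -> Sm n D f.
Proof.
  induction n; intros D f H. exact I. split.
  - intros x Hx. generalize (H 1%nat x Hx). unfold ex_derive_n, Derive_n. exact (fun h => h).
  - apply (IHn D (fun x => Derive f x)). intros k x Hx. destruct k. exact I.
    apply (proj1 (exn_S f k x)). exact (H (S (S k)) x Hx).
Qed.

Definition negl (f : R -> R) : Prop :=
  forall m : nat, exists M e0, 0 < e0 <= 1 /\ forall e, 0 < e <= e0 -> Rabs (f e) <= M * e ^ m.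
Definition modr (f : R -> R) : Prop :=
  exists (N : nat) M e0, 0 < e0 <= 1 /\ forall e, 0 < e <= e0 -> Rabs (f e) <= M * / e ^ N.

Lemma pow_le1 : forall e n, 0 < e <= 1 -> 0 < e ^ n <= 1.
Proof.
  intros e n H. split. apply pow_lt; lra.
  induction n; simpl. lra. assert (0 < e ^ n) by (apply pow_lt; lra). nra.
Qed.

Lemma pow_mono : forall e n m, 0 < e <= 1 -> (n <= m)%nat -> e ^ m <= e ^ n.
Proof.
  intros e n m H Hnm. replace m with (n + (m - n))%nat by lia. rewrite pow_add.
  destruct (pow_le1 e n H). destruct (pow_le1 e (m - n) H). nra.
Qed.

Lemma negl_le : forall f g, negl g ->
  (exists e0, 0 < e0 <= 1 /\ forall e, 0 < e <= e0 -> Rabs (f e) <= g e) -> negl f.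
Proof.
  intros f g Hg [e1 [He1 Hfg]] m. destruct (Hg m) as [M [e0 [He0 H]]].
  exists M, (Rmin e0 e1). split. split. apply Rmin_glb_lt; lra.
  apply Rle_trans with e0. apply Rmin_l. lra.
  intros e He. assert (e <= e0) by (apply Rle_trans with (Rmin e0 e1); [lra|apply Rmin_l]).
  assert (e <= e1) by (apply Rle_trans with (Rmin e0 e1); [lra|apply Rmin_r]).
  apply Rle_trans with (g e). apply Hfg; lra.
  apply Rle_trans with (Rabs (g e)). apply Rle_abs. apply H; lra.
Qed.

Lemma modr_le : forall f g, modr g ->
  (exists e0, 0 < e0 <= 1 /\ forall e, 0 < e <= e0 -> Rabs (f e) <= g e) -> modr f.
Proof.
  intros f g [N [M [e0 [He0 H]]]] [e1 [He1 Hfg]].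
  exists N, M, (Rmin e0 e1). split. split. apply Rmin_glb_lt; lra.
  apply Rle_trans with e0. apply Rmin_l. lra.
  intros e He. assert (e <= e0) by (apply Rle_trans with (Rmin e0 e1); [lra|apply Rmin_l]).
  assert (e <= e1) by (apply Rle_trans with (Rmin e0 e1); [lra|apply Rmin_r]).
  apply Rle_trans with (g e). apply Hfg; lra.
  apply Rle_trans with (Rabs (g e)). apply Rle_abs. apply H; lra.
Qed.

Lemma negl_plus : forall f g, negl f -> negl g -> negl (fun e => f e + g e).
Proof.
  intros f g Hf Hg m. destruct (Hf m) as [M1 [e1 [He1 H1]]]. destruct (Hg m) as [M2 [e2 [He2 H2]]].
  exists (M1 + M2), (Rmin e1 e2). split. split. apply Rmin_glb_lt; lra.
  apply Rle_trans with e1. apply Rmin_l. lra.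
  intros e He. assert (e <= e1) by (apply Rle_trans with (Rmin e1 e2); [lra|apply Rmin_l]).
  assert (e <= e2) by (apply Rle_trans with (Rmin e1 e2); [lra|apply Rmin_r]).
  apply Rle_trans with (Rabs (f e) + Rabs (g e)). apply Rabs_triang.
  specialize (H1 e ltac:(lra)). specialize (H2 e ltac:(lra)). lra.
Qed.

Lemma negl_mod : forall f g, negl f -> modr g -> negl (fun e => f e * g e).
Proof.
  intros f g Hf [N [M2 [e2 [He2 H2]]]] m. destruct (Hf (m + N)%nat) as [M1 [e1 [He1 H1]]].
  exists (Rabs M1 * Rabs M2), (Rmin e1 e2). split. split. apply Rmin_glb_lt; lra.
  apply Rle_trans with e1. apply Rmin_l. lra.
  intros e He. assert (e <= e1) by (apply Rle_trans with (Rmin e1 e2); [lra|apply Rmin_l]).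
  assert (e <= e2) by (apply Rle_trans with (Rmin e1 e2); [lra|apply Rmin_r]).
  specialize (H1 e ltac:(lra)). specialize (H2 e ltac:(lra)).
  rewrite Rabs_mult. rewrite pow_add in H1.
  assert (0 < e ^ m) by (apply pow_lt; lra). assert (0 < e ^ N) by (apply pow_lt; lra).
  assert (Hi : e ^ N * / e ^ N = 1) by (field; lra).
  assert (0 <= Rabs (f e)) by apply Rabs_pos. assert (0 <= Rabs (g e)) by apply Rabs_pos.
  assert (Rabs (f e) <= Rabs M1 * (e ^ m * e ^ N)).
  { apply Rle_trans with (1 := H1). apply Rmult_le_compat_r. nra. apply Rle_abs. }
  assert (Rabs (g e) <= Rabs M2 * / e ^ N).
  { apply Rle_trans with (1 := H2). apply Rmult_le_compat_r. apply Rlt_le, Rinv_0_lt_compat; auto. apply Rle_abs. }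
  apply Rle_trans with ((Rabs M1 * (e ^ m * e ^ N)) * (Rabs M2 * / e ^ N)).
  apply Rmult_le_compat; auto.
  replace (Rabs M1 * (e ^ m * e ^ N) * (Rabs M2 * / e ^ N)) with (Rabs M1 * Rabs M2 * e ^ m * (e ^ N * / e ^ N)) by ring.
  rewrite Hi. lra.
Qed.

Lemma modr_plus : forall f g, modr f -> modr g -> modr (fun e => f e + g e).
Proof.
  intros f g [N1 [M1 [e1 [He1 H1]]]] [N2 [M2 [e2 [He2 H2]]]].
  exists (N1 + N2)%nat, (Rabs M1 + Rabs M2), (Rmin e1 e2). split. split. apply Rmin_glb_lt; lra.
  apply Rle_trans with e1. apply Rmin_l. lra.
  intros e He. assert (e <= e1) by (apply Rle_trans with (Rmin e1 e2); [lra|apply Rmin_l]).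
  assert (e <= e2) by (apply Rle_trans with (Rmin e1 e2); [lra|apply Rmin_r]).
  specialize (H1 e ltac:(lra)). specialize (H2 e ltac:(lra)).
  assert (Hp1 := pow_le1 e N1 ltac:(lra)). assert (Hp2 := pow_le1 e N2 ltac:(lra)).
  rewrite pow_add.
  assert (/ e ^ N1 <= / (e ^ N1 * e ^ N2)).
  { apply Rinv_le_contravar. nra. nra. }
  assert (/ e ^ N2 <= / (e ^ N1 * e ^ N2)).
  { apply Rinv_le_contravar. nra. nra. }
  assert (0 < / e ^ N1) by (apply Rinv_0_lt_compat; lra).
  assert (0 < / e ^ N2) by (apply Rinv_0_lt_compat; lra).
  assert (M1 <= Rabs M1) by apply Rle_abs. assert (M2 <= Rabs M2) by apply Rle_abs.
  assert (0 <= Rabs M1) by apply Rabs_pos. assert (0 <= Rabs M2) by apply Rabs_pos.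
  apply Rle_trans with (Rabs (f e) + Rabs (g e)). apply Rabs_triang.
  nra.
Qed.

Lemma modr_mult : forall f g, modr f -> modr g -> modr (fun e => f e * g e).
Proof.
  intros f g [N1 [M1 [e1 [He1 H1]]]] [N2 [M2 [e2 [He2 H2]]]].
  exists (N1 + N2)%nat, (Rabs M1 * Rabs M2), (Rmin e1 e2). split. split. apply Rmin_glb_lt; lra.
  apply Rle_trans with e1. apply Rmin_l. lra.
  intros e He. assert (e <= e1) by (apply Rle_trans with (Rmin e1 e2); [lra|apply Rmin_l]).
  assert (e <= e2) by (apply Rle_trans with (Rmin e1 e2); [lra|apply Rmin_r]).
  specialize (H1 e ltac:(lra)). specialize (H2 e ltac:(lra)).
  assert (Hp1 := pow_le1 e N1 ltac:(lra)). assert (Hp2 := pow_le1 e N2 ltac:(lra)).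
  rewrite pow_add, Rabs_mult. rewrite Rinv_mult.
  assert (0 < / e ^ N1) by (apply Rinv_0_lt_compat; lra).
  assert (0 < / e ^ N2) by (apply Rinv_0_lt_compat; lra).
  assert (M1 <= Rabs M1) by apply Rle_abs. assert (M2 <= Rabs M2) by apply Rle_abs.
  assert (0 <= Rabs (f e)) by apply Rabs_pos. assert (0 <= Rabs (g e)) by apply Rabs_pos.
  assert (Rabs (f e) <= Rabs M1 * / e ^ N1) by nra.
  assert (Rabs (g e) <= Rabs M2 * / e ^ N2) by nra.
  apply Rle_trans with ((Rabs M1 * / e ^ N1) * (Rabs M2 * / e ^ N2)).
  apply Rmult_le_compat; auto. lra.
Qed.

Lemma modr_const : forall c, modr (fun _ => c).
Proof.
  intros c. exists 0%nat, (Rabs c), 1. split. lra. intros e He. simpl. lra.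
Qed.

Lemma modr_invpow : forall N, modr (fun e => / e ^ N).
Proof.
  intros N. exists N, 1, 1. split. lra. intros e He.
  rewrite Rabs_right. lra. apply Rle_ge, Rlt_le, Rinv_0_lt_compat, pow_lt; lra.
Qed.

Lemma negl_abs : forall f, negl f -> negl (fun e => Rabs (f e)).
Proof.
  intros f Hf m. destruct (Hf m) as [M [e0 [He0 H]]]. exists M, e0. split; auto.
  intros e He. rewrite Rabs_Rabsolu. auto.
Qed.

Lemma modr_abs : forall f, modr f -> modr (fun e => Rabs (f e)).
Proof.
  intros f [N [M [e0 [He0 H]]]]. exists N, M, e0. split; auto.
  intros e He. rewrite Rabs_Rabsolu. auto.
Qed.

Lemma negl_scal : forall c f, negl f -> negl (fun e => c * f e).
Proof.
  intros c f Hf. apply negl_le with (g := fun e => Rabs (f e * c)).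
  - apply negl_abs, negl_mod; auto. apply modr_const.
  - exists 1. split. lra. intros e He. rewrite Rmult_comm. apply Rle_refl.
Qed.

Lemma exp_mul_nat : forall m y, exp (INR m * y) = exp y ^ m.
Proof.
  induction m; intros y. simpl. rewrite Rmult_0_l. apply exp_0.
  rewrite S_INR. replace ((INR m + 1) * y) with (y + INR m * y) by ring.
  rewrite exp_plus, IHm. simpl. ring.
Qed.

Lemma negl_exp : forall c, 0 < c -> negl (fun e => exp (- c / e)).
Proof.
  intros c Hc m. destruct m.
  - exists 1, 1. split. lra. intros e He. simpl. rewrite Rabs_right.
    2: apply Rle_ge, Rlt_le, exp_pos.
    rewrite Rmult_1_r. rewrite <- exp_0. apply Rlt_le, exp_increasing.
    unfold Rdiv. assert (0 < / e) by (apply Rinv_0_lt_compat; lra). nra.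
  - set (k := INR (S m)). assert (Hk : 0 < k) by (apply lt_0_INR; lia).
    exists ((k / c) ^ S m), 1. split. lra. intros e He.
    rewrite Rabs_right. 2: apply Rle_ge, Rlt_le, exp_pos.
    assert (Hy : 0 < c / (k * e)) by (apply Rdiv_lt_0_compat; nra).
    assert (Hz : c / (k * e) < exp (c / (k * e))).
    { generalize (exp_ineq1 (c / (k * e)) ltac:(lra)). lra. }
    assert (Ex : exp (c / e) = exp (c / (k * e)) ^ S m).
    { rewrite <- exp_mul_nat. fold k. f_equal. field. lra. }
    assert (Hp : (c / (k * e)) ^ S m <= exp (c / (k * e)) ^ S m).
    { apply pow_incr. lra. }
    replace (- c / e) with (- (c / e)) by (field; lra). rewrite exp_Ropp, Ex.
    assert (0 < (c / (k * e)) ^ S m) by (apply pow_lt; lra).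
    apply Rle_trans with (/ (c / (k * e)) ^ S m).
    apply Rinv_le_contravar; auto.
    rewrite <- pow_inv. rewrite <- Rpow_mult_distr. apply Req_le.
    f_equal. field. lra.
Qed.

Lemma sq_le : forall a b, 0 <= a -> 0 <= b -> a * a <= b * b -> a <= b.
Proof. intros a b Ha Hb H. destruct (Rle_lt_dec a b); auto. nra. Qed.

Lemma expm1_ge : / 3 <= exp (- 1).
Proof. replace (- 1) with (- (1)) by ring. rewrite exp_Ropp. apply Rinv_le_contravar. apply exp_pos. apply exp_le_3. Qed.

Lemma exp_le_m : forall a b, a <= b -> exp a <= exp b.
Proof. intros a b H. destruct (Rle_lt_or_eq_dec a b H). apply Rlt_le, exp_increasing; auto. subst; lra. Qed.

Lemma Rbnd1 : forall X G Q e p, 0 < e <= 1 -> 0 <= X -> 0 <= G -> 0 < Q -> 0 < p ->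
  p * p * (X * X) <= Q -> G * G <= Q ->
  X * G <= 3 / (e * p) * (G * G + Q * exp (- (G * G * / Q * / (e * e)))).
Proof.
  intros X G Q e p He HX HG HQ Hp H1 H2.
  set (h := exp (- (G * G * / Q * / (e * e)))).
  assert (Hh : 0 < h) by apply exp_pos.
  assert (Key : e * p * X * G <= 3 * (G * G + Q * h)).
  { destruct (Rle_lt_dec (e * e * Q) (G * G)) as [C1 | C1].
    - assert (e * (p * X) <= G).
      { apply sq_le; try nra; repeat apply Rmult_le_pos; lra. }
      nra.
    - assert (Ha : G * G * / Q * / (e * e) < 1).
      { apply Rmult_lt_reg_r with (e * e). nra.
        rewrite Rmult_assoc, Rinv_l, Rmult_1_r by nra.
        apply Rmult_lt_reg_r with Q. auto.
        rewrite Rmult_assoc, Rinv_l, Rmult_1_r by nra. nra. }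
      assert (Hh3 : / 3 <= h).
      { apply Rle_trans with (exp (- 1)). apply expm1_ge. unfold h.
        apply Rlt_le, exp_increasing. lra. }
      assert (p * X * G <= e * Q).
      { apply sq_le. repeat apply Rmult_le_pos; lra. nra.
        replace (p * X * G * (p * X * G)) with ((p * p * (X * X)) * (G * G)) by ring.
        apply Rle_trans with (Q * (e * e * Q)). apply Rmult_le_compat; nra. nra. }
      assert (e * Q <= Q) by nra.
      nra. }
  assert (0 < e * p) by nra.
  apply Rmult_le_reg_l with (e * p). auto.
  unfold Rdiv. replace (e * p * (3 * / (e * p) * (G * G + Q * h))) with (3 * (G * G + Q * h) * ((e * p) * / (e * p))) by ring.
  rewrite Rinv_r by lra. nra.
Qed.

Lemma pow2S : forall e N, e ^ (2 * S N) = e ^ N * e ^ N * (e * e).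
Proof. intros. replace (2 * S N)%nat with (N + N + 2)%nat by lia. rewrite !pow_add. simpl. ring. Qed.

Lemma Rbnd2 : forall X G ps e N M nb, 0 < e <= 1 -> 0 <= X -> 0 <= G -> 0 < ps -> 0 <= M ->
  X <= M * / e ^ N * G + nb ->
  X * ((G * G + e ^ (2 * S N) * (X * X) + ps * ps) * exp (- (G * G * / (G * G + e ^ (2 * S N) * (X * X) + ps * ps) * / (e * e)))
       / (G * G + (G * G + e ^ (2 * S N) * (X * X) + ps * ps) * exp (- (G * G * / (G * G + e ^ (2 * S N) * (X * X) + ps * ps) * / (e * e)))))
  <= 2 * Rabs nb + 2 * M * / e ^ N * ps + (2 + 4 * M * M) * X * exp (- / (2 + 4 * M * M) / e).
Proof.
  intros X G ps e N M nb He HX HG Hps HM Hb.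
  rewrite pow2S.
  set (q := e ^ N). assert (Hq : 0 < q) by (apply pow_lt; lra).
  assert (q <= 1) by (apply (pow_le1 e N); lra).
  set (Q := G * G + q * q * (e * e) * (X * X) + ps * ps).
  assert (HQ : 0 < Q) by (unfold Q; nra).
  set (h := exp (- (G * G * / Q * / (e * e)))).
  assert (Hh : 0 < h) by apply exp_pos.
  set (C := 2 + 4 * M * M). assert (HC : 2 <= C) by (unfold C; nra).
  set (E := exp (- / C / e)). assert (HE : 0 < E) by apply exp_pos.
  set (B := M * / q). assert (HB : 0 <= B) by (unfold B; apply Rmult_le_pos; [lra | apply Rlt_le, Rinv_0_lt_compat; lra]).
  assert (HBq : B * q = M) by (unfold B; field; lra).
  set (D := G * G + Q * h). assert (HD : 0 < D) by (unfold D; nra).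
  set (t := Q * h / D).
  assert (Ht0 : 0 <= t) by (unfold t; apply Rmult_le_pos; [nra | apply Rlt_le, Rinv_0_lt_compat; lra]).
  assert (Ht1 : t <= 1).
  { unfold t. apply Rmult_le_reg_r with D. auto. unfold Rdiv. rewrite Rmult_assoc, Rinv_l by lra. unfold D. nra. }
  assert (Hn1 : nb <= Rabs nb) by apply Rle_abs.
  assert (HnP : 0 <= Rabs nb) by apply Rabs_pos.
  assert (Hr2 : 0 <= 2 * M * / q * ps) by (apply Rmult_le_pos; [apply Rmult_le_pos; [lra | apply Rlt_le, Rinv_0_lt_compat; lra] | lra]).
  assert (Hr3 : 0 <= C * X * E) by (apply Rmult_le_pos; [nra | lra]).
  assert (Hb' : X <= B * G + nb) by (unfold B, q; exact Hb). clear Hb.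
  replace (2 * M * / q * ps) with (2 * B * ps) in * by (unfold B; ring).
  assert (HXt : X * t <= X) by (apply Rle_trans with (X * 1); [apply Rmult_le_compat_l; lra | lra]).
  destruct (Rlt_le_dec (2 * B * G) X) as [CA | CA].
  -
    assert (X < 2 * nb) by lra. lra.
  - destruct (Rlt_le_dec G ps) as [CB | CB].
    + assert (B * G <= B * ps) by (apply Rmult_le_compat_l; lra). lra.
    + assert (HG0 : 0 < G) by lra.
      assert (HX2 : q * q * (e * e) * (X * X) <= 4 * M * M * (G * G)).
      { assert (q * X <= 2 * M * G) by (rewrite <- HBq; nra).
        assert (e * e <= 1) by nra.
        assert (0 <= q * X) by nra.
        assert (q * X * (q * X) <= 2 * M * G * (2 * M * G)) by nra.
        nra. }
      assert (HQC : Q <= C * (G * G)) by (unfold Q, C; nra).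
      assert (Hu : / C <= G * G * / Q).
      { apply Rmult_le_reg_r with (C * Q). nra.
        replace (/ C * (C * Q)) with Q by (field; lra).
        replace (G * G * / Q * (C * Q)) with (C * (G * G)) by (field; lra). auto. }
      assert (HhE : h <= E).
      { unfold h, E.
        assert (/ C / e <= G * G * / Q * / (e * e)).
        { unfold Rdiv. apply Rle_trans with (G * G * / Q * / e).
          apply Rmult_le_compat_r. apply Rlt_le, Rinv_0_lt_compat; lra. auto.
          apply Rmult_le_compat_l. apply Rmult_le_pos. nra. apply Rlt_le, Rinv_0_lt_compat; lra.
          apply Rinv_le_contravar; nra. }
        apply exp_le_m. unfold Rdiv in *. lra. }
      assert (Htc : t <= C * h).
      { unfold t. apply Rmult_le_reg_r with D. auto.
        replace (Q * h / D * D) with (Q * h) by (field; lra).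
        assert (G * G <= D) by (unfold D; nra).
        apply Rle_trans with (C * (G * G) * h). apply Rmult_le_compat_r; lra.
        replace (C * h * D) with ((C * h) * D) by ring. replace (C * (G * G) * h) with ((C * h) * (G * G)) by ring.
        apply Rmult_le_compat_l; nra. }
      assert (X * t <= C * X * E).
      { apply Rle_trans with (X * (C * h)). apply Rmult_le_compat_l; auto.
        replace (C * X * E) with (X * (C * E)) by ring. apply Rmult_le_compat_l; auto. nra. }
      lra.
Qed.

Definition Dd (d : R) : R -> Prop := fun x => 0 < x < 1 + d.
Lemma Dd_open : forall d, open (Dd d).
Proof. intros d. unfold Dd. apply open_and; [apply open_gt | apply open_lt]. Qed.

Definition SMo (f : R -> R) : Prop := exists d, 0 < d /\ forall n, Sm n (Dd d) f.

Lemma Sm_sub : forall n D D' f, (forall x, D' x -> D x) -> Sm n D f -> Sm n D' f.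
Proof.
  induction n; intros D D' f Hs H. exact I. destruct H as [H1 H2]. split.
  - intros x Hx. apply H1, Hs, Hx.
  - apply (IHn D D' (fun x => Derive f x)); auto.
Qed.

Lemma smoothR_SMo : forall f, smoothR f -> SMo f.
Proof.
  intros f [d [Hd H]]. exists d. split; auto. intros n. apply Sm_of_exn. intros k x Hx. apply H, Hx.
Qed.

Lemma SMo_smoothR : forall f, SMo f -> smoothR f.
Proof.
  intros f [d [Hd H]]. exists d. split; auto. intros n x Hx. eapply exn_of_Sm. apply H. exact Hx.
Qed.

Lemma SMo_two : forall f g, SMo f -> SMo g -> exists d, 0 < d /\ (forall n, Sm n (Dd d) f) /\ (forall n, Sm n (Dd d) g).
Proof.
  intros f g [d1 [H1 F]] [d2 [H2 G]]. exists (Rmin d1 d2). split. apply Rmin_glb_lt; auto.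
  assert (Rmin d1 d2 <= d1) by apply Rmin_l. assert (Rmin d1 d2 <= d2) by apply Rmin_r.
  split; intros n.
  - apply (Sm_sub n (Dd d1)). intros x Hx; unfold Dd in *; lra. auto.
  - apply (Sm_sub n (Dd d2)). intros x Hx; unfold Dd in *; lra. auto.
Qed.

Lemma SMo_plus : forall f g, SMo f -> SMo g -> SMo (fun x => f x + g x).
Proof.
  intros f g Hf Hg. destruct (SMo_two f g Hf Hg) as [d [Hd [F G]]].
  exists d. split; auto. intros n. apply Sm_plus; auto. apply Dd_open.
Qed.

Lemma SMo_mult : forall f g, SMo f -> SMo g -> SMo (fun x => f x * g x).
Proof.
  intros f g Hf Hg. destruct (SMo_two f g Hf Hg) as [d [Hd [F G]]].
  exists d. split; auto. intros n. apply Sm_mult; auto. apply Dd_open.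
Qed.

Lemma SMo_opp : forall f, SMo f -> SMo (fun x => - f x).
Proof.
  intros f [d [Hd F]]. exists d. split; auto. intros n. apply Sm_opp; auto. apply Dd_open.
Qed.

Lemma SMo_minus : forall f g, SMo f -> SMo g -> SMo (fun x => f x - g x).
Proof.
  intros f g Hf Hg. apply SMo_plus; auto. apply SMo_opp; auto.
Qed.

Lemma SMo_const : forall c, SMo (fun _ => c).
Proof.
  intros c. exists 1. split. lra. intros n. apply Sm_const. apply Dd_open.
Qed.

Lemma SMo_id : SMo (fun x => x).
Proof.
  exists 1. split. lra. intros n. apply Sm_id. apply Dd_open.
Qed.

Lemma SMo_pow : forall p, SMo (fun x => x ^ p).
Proof.
  intros p. exists 1. split. lra. intros n. apply Sm_of_exn. intros k x _. apply ex_derive_n_pow.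
Qed.

Lemma SMo_inv : forall f, SMo f -> (forall x, 0 < x -> f x <> 0) -> SMo (fun x => / f x).
Proof.
  intros f [d [Hd F]] Hnz. exists d. split; auto. intros n. apply Sm_inv; auto. apply Dd_open.
  intros x [Hx _]. auto.
Qed.

Lemma SMo_exp : forall f, SMo f -> SMo (fun x => exp (f x)).
Proof.
  intros f [d [Hd F]]. exists d. split; auto. intros n. apply Sm_exp; auto. apply Dd_open.
Qed.

Lemma Ceq : forall u v : C, Re u = Re v -> Im u = Im v -> u = v.
Proof. intros [a b] [c d]. simpl. intros -> ->. reflexivity. Qed.

Definition SMc (u : net) : Prop := SMo (fun e => Re (u e)) /\ SMo (fun e => Im (u e)).

Lemma smooth_SMc : forall u, smooth_net u <-> SMc u.
Proof.
  intros u. unfold smooth_net, SMc. split; intros [H1 H2]; split.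
  - now apply smoothR_SMo.
  - now apply smoothR_SMo.
  - now apply SMo_smoothR.
  - now apply SMo_smoothR.
Qed.

Lemma SMc_mult : forall u v, SMc u -> SMc v -> SMc (fun e => (u e * v e)%C).
Proof.
  intros u v [u1 u2] [v1 v2]. split; simpl.
  - apply SMo_minus; apply SMo_mult; auto.
  - apply SMo_plus; apply SMo_mult; auto.
Qed.

Lemma SMc_plus : forall u v, SMc u -> SMc v -> SMc (fun e => (u e + v e)%C).
Proof.
  intros u v [u1 u2] [v1 v2]. split; simpl; apply SMo_plus; auto.
Qed.

Definition modc (u : net) := modr (fun e => Cmod (u e)).
Definition neglc (u : net) := negl (fun e => Cmod (u e)).

Lemma moderate_modc : forall u, moderate u <-> modc u.
Proof.
  intros u. unfold moderate, modc, modr. split.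
  - intros [N [M [e0 [He H]]]]. exists N, M, e0. split; auto. intros e Hee.
    rewrite Rabs_right by (apply Rle_ge, Cmod_ge_0). auto.
  - intros [N [M [e0 [He H]]]]. exists N, M, e0. split; auto. intros e Hee.
    specialize (H e Hee). rewrite Rabs_right in H by (apply Rle_ge, Cmod_ge_0). auto.
Qed.

Lemma negligible_neglc : forall u, negligible u <-> neglc u.
Proof.
  intros u. unfold negligible, neglc, negl. split.
  - intros H m. destruct (H m) as [M [e0 [He H']]]. exists M, e0. split; auto. intros e Hee.
    rewrite Rabs_right by (apply Rle_ge, Cmod_ge_0). auto.
  - intros H m. destruct (H m) as [M [e0 [He H']]]. exists M, e0. split; auto. intros e Hee.
    specialize (H' e Hee). rewrite Rabs_right in H' by (apply Rle_ge, Cmod_ge_0). auto.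
Qed.

Lemma EMsm_mult : forall K u v, EMsm K u -> EMsm K v -> EMsm K (fun e => (u e * v e)%C).
Proof.
  intros K u v [Ku [Su Mu]] [Kv [Sv Mv]]. split; [|split].
  - destruct K; simpl in *; auto. intros e He. rewrite Ku, Kv by auto. ring.
  - apply smooth_SMc. apply SMc_mult; apply smooth_SMc; auto.
  - apply moderate_modc. apply moderate_modc in Mu, Mv. unfold modc in *.
    apply modr_le with (g := fun e => Rabs (Cmod (u e) * Cmod (v e))).
    + apply modr_abs, modr_mult; auto.
    + exists 1. split. lra. intros e He. rewrite Cmod_mult. apply Rle_refl.
Qed.

Lemma EMsm_plus : forall K u v, EMsm K u -> EMsm K v -> EMsm K (fun e => (u e + v e)%C).
Proof.
  intros K u v [Ku [Su Mu]] [Kv [Sv Mv]]. split; [|split].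
  - destruct K; simpl in *; auto. intros e He. rewrite Ku, Kv by auto. ring.
  - apply smooth_SMc. apply SMc_plus; apply smooth_SMc; auto.
  - apply moderate_modc. apply moderate_modc in Mu, Mv. unfold modc in *.
    apply modr_le with (g := fun e => Rabs (Cmod (u e) + Cmod (v e))).
    + apply modr_abs, modr_plus; auto.
    + exists 1. split. lra. intros e He. rewrite (Rabs_right (Cmod _)) by (apply Rle_ge, Cmod_ge_0).
      apply Rle_trans with (Cmod (u e) + Cmod (v e)). apply Cmod_triangle. apply Rle_abs.
Qed.

Lemma neglc_plus : forall u v, neglc u -> neglc v -> neglc (fun e => (u e + v e)%C).
Proof.
  intros u v Hu Hv. unfold neglc in *.
  apply negl_le with (g := fun e => Cmod (u e) + Cmod (v e)).
  - apply negl_plus; auto.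
  - exists 1. split. lra. intros e He. rewrite Rabs_right by (apply Rle_ge, Cmod_ge_0). apply Cmod_triangle.
Qed.

Lemma neglc_mult : forall u v, neglc u -> modc v -> neglc (fun e => (u e * v e)%C).
Proof.
  intros u v Hu Hv. unfold neglc, modc in *.
  apply negl_le with (g := fun e => Rabs (Cmod (u e) * Cmod (v e))).
  - apply negl_abs, negl_mod; auto.
  - exists 1. split. lra. intros e He. rewrite Cmod_mult. apply Rle_refl.
Qed.

Lemma neglc_ext : forall u v, neglc u -> (forall e, v e = u e) -> neglc v.
Proof.
  intros u v Hu Hext. unfold neglc in *. apply negl_le with (g := fun e => Cmod (u e)); auto.
  exists 1. split. lra. intros e He. rewrite Hext. rewrite Rabs_right by (apply Rle_ge, Cmod_ge_0). lra.
Qed.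

Lemma EMsm_modc : forall K u, EMsm K u -> modc u.
Proof. intros K u [_ [_ H]]. now apply moderate_modc. Qed.

Lemma princ_trans : forall K g h x w, EMsm K w -> net_eq g (fun e => (h e * w e)%C) ->
  in_principal K g x -> in_principal K h x.
Proof.
  intros K g h x w Hw Hg [c [Hc Hx]]. exists (fun e => (w e * c e)%C). split.
  apply EMsm_mult; auto.
  unfold net_eq in *. apply negligible_neglc. apply negligible_neglc in Hg, Hx.
  apply neglc_ext with (u := fun e => ((x e - g e * c e) + (g e - h e * w e) * c e)%C).
  - apply neglc_plus; auto. apply neglc_mult; auto. eapply EMsm_modc; eauto.
  - intros e. simpl. ring.
Qed.

Definition Xr2 (u : net) (e : R) := Re (u e) * Re (u e) + Im (u e) * Im (u e).
Definition psi (e : R) := exp (- / e).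
Definition Qf (x g : net) (N : nat) (e : R) := Xr2 g e + e ^ (2 * S N) * Xr2 x e + psi e * psi e.
Definition hf (x g : net) (N : nat) (e : R) := exp (- (Xr2 g e * / Qf x g N e * / (e * e))).
Definition Df (x g : net) (N : nat) (e : R) := Xr2 g e + Qf x g N e * hf x g N e.
Definition wf (x g : net) (N : nat) : net := fun e =>
  ((Re (x e) * Re (g e) + Im (x e) * Im (g e)) * / Df x g N e,
   (Im (x e) * Re (g e) - Re (x e) * Im (g e)) * / Df x g N e).

Lemma Xr2_Cmod : forall u e, Xr2 u e = Cmod (u e) * Cmod (u e).
Proof. intros. unfold Xr2. replace (Cmod (u e) * Cmod (u e)) with (Cmod (u e) ^ 2) by ring. rewrite Cmod2_alt. ring. Qed.

Lemma Xr2_nn : forall u e, 0 <= Xr2 u e.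
Proof. intros. unfold Xr2. nra. Qed.

Lemma psi_pos : forall e, 0 < psi e.
Proof. intros. apply exp_pos. Qed.

Lemma Qf_pos : forall x g N e, 0 < e -> 0 < Qf x g N e.
Proof.
  intros. unfold Qf. assert (0 < e ^ (2 * S N)) by (apply pow_lt; lra).
  generalize (Xr2_nn g e) (Xr2_nn x e) (psi_pos e). nra.
Qed.

Lemma Df_pos : forall x g N e, 0 < e -> 0 < Df x g N e.
Proof.
  intros. unfold Df. generalize (Xr2_nn g e) (Qf_pos x g N e H). unfold hf.
  generalize (exp_pos (- (Xr2 g e * / Qf x g N e * / (e * e)))). nra.
Qed.

Lemma SMo_Xr2 : forall u, SMc u -> SMo (Xr2 u).
Proof.
  intros u [H1 H2]. unfold Xr2. apply SMo_plus; apply SMo_mult; auto.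
Qed.

Lemma SMo_psi : SMo psi.
Proof.
  unfold psi. apply SMo_exp, SMo_opp, SMo_inv. apply SMo_id. intros; lra.
Qed.

Lemma SMo_Qf : forall x g N, SMc x -> SMc g -> SMo (Qf x g N).
Proof.
  intros. unfold Qf. apply SMo_plus. apply SMo_plus. now apply SMo_Xr2.
  apply SMo_mult. apply SMo_pow. now apply SMo_Xr2.
  apply SMo_mult; apply SMo_psi.
Qed.

Lemma SMo_Df : forall x g N, SMc x -> SMc g -> SMo (Df x g N).
Proof.
  intros. unfold Df, hf. apply SMo_plus. now apply SMo_Xr2.
  apply SMo_mult. now apply SMo_Qf.
  apply SMo_exp, SMo_opp. apply SMo_mult. apply SMo_mult. now apply SMo_Xr2.
  apply SMo_inv. now apply SMo_Qf. intros e He. generalize (Qf_pos x g N e He). lra.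
  apply SMo_inv. apply SMo_mult; apply SMo_id. intros e He. nra.
Qed.

Lemma SMc_wf : forall x g N, SMc x -> SMc g -> SMc (wf x g N).
Proof.
  intros x g N Hx Hg. assert (Hx' := Hx). assert (Hg' := Hg). destruct Hx' as [x1 x2], Hg' as [g1 g2].
  assert (HD : SMo (fun e => / Df x g N e)).
  { apply SMo_inv. now apply SMo_Df. intros e He. generalize (Df_pos x g N e He). lra. }
  split; unfold wf; simpl; apply SMo_mult; auto.
  - apply SMo_plus; apply SMo_mult; auto.
  - apply SMo_minus; apply SMo_mult; auto.
Qed.

Lemma wf_err : forall x g N e, 0 < e ->
  (x e - g e * wf x g N e)%C = (x e * RtoC (Qf x g N e * hf x g N e / Df x g N e))%C.
Proof.
  intros x g N e He. assert (HD := Df_pos x g N e He).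
  unfold Df in *. unfold wf, Df. 
  set (Q := Qf x g N e) in *. set (h := hf x g N e) in *. unfold Xr2 in *.
  destruct (x e) as [a b]. destruct (g e) as [c d]. simpl in *.
  apply Ceq; simpl; field; lra.
Qed.

Lemma wf_cmod : forall x g N e, 0 < e ->
  Cmod (wf x g N e) = Cmod (x e) * Cmod (g e) * / Df x g N e.
Proof.
  intros x g N e He. assert (HD := Df_pos x g N e He).
  assert (E : wf x g N e = (x e * Cconj (g e) * RtoC (/ Df x g N e))%C).
  { unfold wf. destruct (x e) as [a b]. destruct (g e) as [c d]. apply Ceq; simpl; ring. }
  rewrite E, !Cmod_mult, Cmod_conj, Cmod_R. rewrite Rabs_right. ring.
  apply Rle_ge, Rlt_le, Rinv_0_lt_compat; auto.
Qed.

Lemma divgen : forall K x g (N : nat) M e0 nb, EMsm K x -> EMsm K g -> 0 <= M -> negl nb -> 0 < e0 <= 1 ->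
  (forall e, 0 < e <= e0 -> Cmod (x e) <= M * / e ^ N * Cmod (g e) + nb e) -> in_principal K g x.
Proof.
  intros K x g N M e0 nb Hx Hg HM Hnb He0 Hb.
  assert (Hxc := Hx). assert (Hgc := Hg).
  destruct Hxc as [Kx [Sx Mx]], Hgc as [Kg [Sg Mg]].
  apply smooth_SMc in Sx, Sg.
  exists (wf x g N). split; [split; [|split]|].
  - destruct K; simpl; auto. intros e He. simpl in Kx, Kg. rewrite Kx, Kg by auto. ring.
  - apply smooth_SMc. apply SMc_wf; auto.
  - apply moderate_modc. unfold modc.
    apply modr_le with (g := fun e => 3 * / e ^ (S (S N))).
    + apply modr_le with (g := fun e => Rabs (3 * / e ^ (S (S N)))).
      apply modr_abs, modr_mult. apply modr_const. apply modr_invpow.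
      exists 1. split. lra. intros. apply Rle_refl.
    + exists 1. split. lra. intros e He.
      rewrite Rabs_right by (apply Rle_ge, Cmod_ge_0).
      rewrite wf_cmod by lra.
      assert (HD := Df_pos x g N e ltac:(lra)).
      assert (Hp : 0 < e ^ S N) by (apply pow_lt; lra).
      assert (HR := Rbnd1 (Cmod (x e)) (Cmod (g e)) (Qf x g N e) e (e ^ S N) He (Cmod_ge_0 _) (Cmod_ge_0 _)
                 (Qf_pos x g N e ltac:(lra)) Hp).
      assert (E1 : Cmod (g e) * Cmod (g e) + Qf x g N e * exp (- (Cmod (g e) * Cmod (g e) * / Qf x g N e * / (e * e)))
                   = Df x g N e).
      { unfold Df, hf. rewrite Xr2_Cmod. reflexivity. }
      rewrite E1 in HR.
      assert (Hq1 : e ^ S N * e ^ S N * (Cmod (x e) * Cmod (x e)) <= Qf x g N e).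
      { unfold Qf. rewrite <- (Xr2_Cmod x). replace (e ^ (2 * S N)) with (e ^ S N * e ^ S N).
        generalize (Xr2_nn g e) (psi_pos e). nra. rewrite <- pow_add. f_equal. lia. }
      assert (Hq2 : Cmod (g e) * Cmod (g e) <= Qf x g N e).
      { unfold Qf. rewrite <- (Xr2_Cmod g). generalize (Xr2_nn x e) (psi_pos e).
        assert (0 < e ^ (2 * S N)) by (apply pow_lt; lra). nra. }
      specialize (HR Hq1 Hq2).
      apply Rmult_le_reg_r with (Df x g N e). auto.
      rewrite Rmult_assoc, Rinv_l, Rmult_1_r by lra.
      replace (e ^ S (S N)) with (e * e ^ S N) by reflexivity.
      unfold Rdiv in HR. exact HR.
  -
    unfold net_eq. apply negligible_neglc. unfold neglc.
    set (C := 2 + 4 * M * M).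
    assert (HC : 0 < C) by (unfold C; nra).
    apply negl_le with (g := fun e => 2 * Rabs (nb e) + (2 * M) * (exp (- (1) / e) * / e ^ N)
                                     + C * (exp (- / C / e) * Cmod (x e))).
    + apply negl_plus. apply negl_plus.
      apply negl_scal, negl_abs; auto.
      apply negl_scal, negl_mod. apply negl_exp; lra. apply modr_invpow.
      apply negl_scal, negl_mod. apply negl_exp. apply Rinv_0_lt_compat; auto.
      apply EMsm_modc with K; auto.
    + exists e0. split; auto. intros e He.
      rewrite Rabs_right by (apply Rle_ge, Cmod_ge_0).
      rewrite wf_err by lra. rewrite Cmod_mult, Cmod_R.
      assert (HD := Df_pos x g N e ltac:(lra)).
      assert (HQ := Qf_pos x g N e ltac:(lra)).
      rewrite Rabs_right.
      2: { apply Rle_ge. unfold Rdiv. apply Rmult_le_pos. apply Rmult_le_pos. lra. apply Rlt_le, exp_pos.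
           apply Rlt_le, Rinv_0_lt_compat; auto. }
      assert (HR := Rbnd2 (Cmod (x e)) (Cmod (g e)) (psi e) e N M (nb e) ltac:(lra) (Cmod_ge_0 _) (Cmod_ge_0 _)
                  (psi_pos e) HM (Hb e He)).
      unfold Df, hf, Qf. rewrite !Xr2_Cmod.
      replace (exp (- (1) / e)) with (psi e).
      2: { unfold psi. f_equal. field. lra. }
      unfold C. eapply Rle_trans; [apply HR|]. apply Req_le. ring.
Qed.

Lemma relfact : forall (u : C) (c : R),
  Rabs (Re u - c) <= Cmod (u - RtoC c) /\ Cmod u <= Rabs c + Cmod (u - RtoC c) /\
  Rabs c <= Cmod u + Cmod (u - RtoC c).
Proof.
  intros u c. split; [|split].
  - generalize (re_le_Cmod (u - RtoC c)). destruct u; simpl. auto.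
  - replace u with ((u - RtoC c) + RtoC c)%C at 1 by ring.
    generalize (Cmod_triangle (u - RtoC c) (RtoC c)). rewrite Cmod_R. lra.
  - rewrite <- Cmod_R. assert (E : RtoC c = (u + - (u - RtoC c))%C) by ring.
    rewrite E at 1. generalize (Cmod_triangle u (- (u - RtoC c))). rewrite Cmod_opp. auto.
Qed.

Lemma Re_le_Cmod : forall u : C, Re u <= Cmod u /\ - Re u <= Cmod u.
Proof. intros u. generalize (re_le_Cmod u). intros H. split. apply Rle_trans with (Rabs (Re u)). apply Rle_abs. auto.
  apply Rle_trans with (Rabs (Re u)). rewrite <- Rabs_Ropp. apply Rle_abs. auto. Qed.

Lemma Rmax_facts : forall p q, p <= Rmax p q /\ q <= Rmax p q /\ (Rmax p q = p \/ Rmax p q = q).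
Proof. intros. unfold Rmax. destruct (Rle_dec p q); lra. Qed.
Lemma Rmin_facts : forall p q, Rmin p q <= p /\ Rmin p q <= q /\ (Rmin p q = p \/ Rmin p q = q).
Proof. intros. unfold Rmin. destruct (Rle_dec p q); lra. Qed.

Lemma EMsm_KR_K : forall K u, EMsm KR u -> EMsm K u.
Proof. intros K u [H1 H2]. destruct K; split; auto. exact I. Qed.

Lemma neg_negl : forall u v : net, net_eq u v -> negl (fun e => Cmod (u e - v e)).
Proof. intros u v H. apply negligible_neglc in H. exact H. Qed.

Lemma cinv1 : forall M e, M * / e ^ 0 = M.
Proof. intros. simpl. rewrite Rinv_1. ring. Qed.

Lemma sum_to_princ : forall K r s A x w1 w2,
  EMsm K w1 -> EMsm K w2 ->
  net_eq r (fun e => (A e * w1 e)%C) -> net_eq s (fun e => (A e * w2 e)%C) ->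
  in_sum_ideal K r s x -> in_principal K A x.
Proof.
  intros K r s A x w1 w2 Hw1 Hw2 H1 H2 [c [d [Hc [Hd Hx]]]].
  exists (fun e => (w1 e * c e + w2 e * d e)%C). split.
  apply EMsm_plus; apply EMsm_mult; auto.
  unfold net_eq in *. apply negligible_neglc. apply negligible_neglc in H1, H2, Hx.
  apply neglc_ext with (u := fun e => ((x e - (r e * c e + s e * d e)) + ((r e - A e * w1 e) * c e + (s e - A e * w2 e) * d e))%C).
  - apply neglc_plus; auto. apply neglc_plus; apply neglc_mult; auto; eapply EMsm_modc; eauto.
  - intros e. ring.
Qed.

Lemma princ_to_sum : forall K r s a b x u v,
  EMsm K u -> EMsm K v ->
  net_eq a (fun e => (r e * u e)%C) -> net_eq b (fun e => (s e * v e)%C) ->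
  in_principal K (net_add a b) x -> in_sum_ideal K r s x.
Proof.
  intros K r s a b x u v Hu Hv H1 H2 [c [Hc Hx]].
  exists (fun e => (u e * c e)%C), (fun e => (v e * c e)%C). split; [|split].
  apply EMsm_mult; auto. apply EMsm_mult; auto.
  unfold net_eq, net_add in *. apply negligible_neglc. apply negligible_neglc in H1, H2, Hx.
  apply neglc_ext with (u := fun e => ((x e - (a e + b e) * c e) + ((a e - r e * u e) * c e + (b e - s e * v e) * c e))%C).
  - apply neglc_plus; auto. apply neglc_plus; apply neglc_mult; auto; eapply EMsm_modc; eauto.
  - intros e. ring.
Qed.

Lemma Rabs_facts : forall t, t <= Rabs t /\ - t <= Rabs t /\ (Rabs t = t \/ Rabs t = - t).
Proof. intros t. unfold Rabs. destruct (Rcase_abs t); lra. Qed.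

Lemma Re_plus_C : forall u v : C, Re (u + v)%C = Re u + Re v.
Proof. intros [] []; reflexivity. Qed.

Ltac facts r s a b mx mn e :=
  let H1 := fresh in let H2 := fresh in let H3 := fresh in let H4 := fresh in
  let H5 := fresh in let H6 := fresh in let H7 := fresh in let H8 := fresh in
  let H9 := fresh in let H10 := fresh in let H11 := fresh in let H12 := fresh in
  pose proof (relfact (a e) (Cmod (r e))) as H1;
  pose proof (relfact (b e) (Cmod (s e))) as H2;
  pose proof (relfact (mx e) (Rmax (Re (a e)) (Re (b e)))) as H3;
  pose proof (relfact (mn e) (Rmin (Re (a e)) (Re (b e)))) as H4;
  pose proof (Rmax_facts (Re (a e)) (Re (b e))) as H5;
  pose proof (Rmin_facts (Re (a e)) (Re (b e))) as H6;
  pose proof (Rabs_facts (Re (a e) - Cmod (r e))) as H7;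
  pose proof (Rabs_facts (Re (b e) - Cmod (s e))) as H8;
  pose proof (Rabs_facts (Rmax (Re (a e)) (Re (b e)))) as H9;
  pose proof (Rabs_facts (Rmin (Re (a e)) (Re (b e)))) as H10;
  pose proof (Re_le_Cmod (a e + b e)%C) as H11;
  pose proof (Cmod_triangle (a e) (b e)) as H12;
  pose proof (Cmod_ge_0 (r e)); pose proof (Cmod_ge_0 (s e));
  pose proof (Cmod_ge_0 (a e - RtoC (Cmod (r e))));
  pose proof (Cmod_ge_0 (b e - RtoC (Cmod (s e))));
  pose proof (Cmod_ge_0 (mx e - RtoC (Rmax (Re (a e)) (Re (b e)))));
  pose proof (Cmod_ge_0 (mn e - RtoC (Rmin (Re (a e)) (Re (b e)))));
  rewrite (Rabs_right (Cmod (r e))) in H1 by (apply Rle_ge, Cmod_ge_0);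
  rewrite (Rabs_right (Cmod (s e))) in H2 by (apply Rle_ge, Cmod_ge_0);
  rewrite (Re_plus_C (a e) (b e)) in H11.

Lemma bnd_mono : forall e M1 M2 N1 N2, 0 < e <= 1 ->
  M1 * / e ^ N1 <= (Rabs M1 + Rabs M2) * / e ^ (N1 + N2) /\
  M2 * / e ^ N2 <= (Rabs M1 + Rabs M2) * / e ^ (N1 + N2).
Proof.
  intros e M1 M2 N1 N2 He.
  assert (P1 : e ^ (N1 + N2) <= e ^ N1) by (apply pow_mono; auto; lia).
  assert (P2 : e ^ (N1 + N2) <= e ^ N2) by (apply pow_mono; auto; lia).
  assert (Q0 : 0 < e ^ (N1 + N2)) by (apply pow_lt; lra).
  assert (I1 : / e ^ N1 <= / e ^ (N1 + N2)) by (apply Rinv_le_contravar; auto).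
  assert (I2 : / e ^ N2 <= / e ^ (N1 + N2)) by (apply Rinv_le_contravar; auto).
  assert (0 < / e ^ N1) by (apply Rinv_0_lt_compat, pow_lt; lra).
  assert (0 < / e ^ N2) by (apply Rinv_0_lt_compat, pow_lt; lra).
  assert (0 < / e ^ (N1 + N2)) by (apply Rinv_0_lt_compat; lra).
  pose proof (Rabs_facts M1). pose proof (Rabs_facts M2).
  pose proof (Rabs_pos M1). pose proof (Rabs_pos M2).
  split; nra.
Qed.

Theorem proposition4p26 :
  forall (K : Kfield) (r s a b mx mn : net),
    EMsm K r -> EMsm K s ->
    is_abs r a -> is_abs s b ->
    is_max a b mx -> is_min a b mn ->
    forall x : net, EMsm K x ->
      ((in_sum_ideal K r s x <-> in_principal K (net_add a b) x) /\
       (in_principal K (net_add a b) x <-> in_principal K mx x)) /\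
      ((in_principal K r x /\ in_principal K s x) <-> in_principal K mn x).
Proof.
  intros K r s a b mx mn Hr Hs [Ha Hae] [Hb Hbe] [Hmx Hmxe] [Hmn Hmne] x Hx.
  assert (Na : negl (fun e => Cmod (a e - RtoC (Cmod (r e))))) by exact (neg_negl _ _ Hae).
  assert (Nb : negl (fun e => Cmod (b e - RtoC (Cmod (s e))))) by exact (neg_negl _ _ Hbe).
  assert (Nmx : negl (fun e => Cmod (mx e - RtoC (Rmax (Re (a e)) (Re (b e)))))) by exact (neg_negl _ _ Hmxe).
  assert (Nmn : negl (fun e => Cmod (mn e - RtoC (Rmin (Re (a e)) (Re (b e)))))) by exact (neg_negl _ _ Hmne).
  apply (EMsm_KR_K K) in Ha, Hb, Hmx, Hmn.
  assert (HA : EMsm K (net_add a b)) by (apply EMsm_plus; auto).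
  assert (Pr : in_principal K (net_add a b) r).
  { apply (divgen K r (net_add a b) 0 1 1 (fun e => Cmod (a e - RtoC (Cmod (r e))) + Cmod (b e - RtoC (Cmod (s e))))); auto.
    lra. apply negl_plus; auto. lra.
    intros e He. rewrite cinv1. unfold net_add. facts r s a b mx mn e. lra. }
  assert (Ps : in_principal K (net_add a b) s).
  { apply (divgen K s (net_add a b) 0 1 1 (fun e => Cmod (a e - RtoC (Cmod (r e))) + Cmod (b e - RtoC (Cmod (s e))))); auto.
    lra. apply negl_plus; auto. lra.
    intros e He. rewrite cinv1. unfold net_add. facts r s a b mx mn e. lra. }
  assert (Par : in_principal K r a).
  { apply (divgen K a r 0 1 1 (fun e => Cmod (a e - RtoC (Cmod (r e))))); auto.
    lra. lra. intros e He. rewrite cinv1. facts r s a b mx mn e. lra. }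
  assert (Pbs : in_principal K s b).
  { apply (divgen K b s 0 1 1 (fun e => Cmod (b e - RtoC (Cmod (s e))))); auto.
    lra. lra. intros e He. rewrite cinv1. facts r s a b mx mn e. lra. }
  assert (PAmx : in_principal K mx (net_add a b)).
  { apply (divgen K (net_add a b) mx 0 2 1 (fun e => 2 * Cmod (mx e - RtoC (Rmax (Re (a e)) (Re (b e))))
        + 3 * (Cmod (a e - RtoC (Cmod (r e))) + Cmod (b e - RtoC (Cmod (s e)))))); auto.
    lra. apply negl_plus. apply negl_scal; auto. apply negl_scal, negl_plus; auto. lra.
    intros e He. rewrite cinv1. unfold net_add. facts r s a b mx mn e.
    destruct H4 as [? [? [E|E]]]; rewrite E in *; lra. }
  assert (PmxA : in_principal K (net_add a b) mx).
  { apply (divgen K mx (net_add a b) 0 1 1 (fun e => Cmod (mx e - RtoC (Rmax (Re (a e)) (Re (b e))))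
        + 2 * (Cmod (a e - RtoC (Cmod (r e))) + Cmod (b e - RtoC (Cmod (s e)))))); auto.
    lra. apply negl_plus; auto. apply negl_scal, negl_plus; auto. lra.
    intros e He. rewrite cinv1. unfold net_add. facts r s a b mx mn e.
    destruct H4 as [? [? [E|E]]]; rewrite E in *; lra. }
  assert (Pmnr : in_principal K r mn).
  { apply (divgen K mn r 0 1 1 (fun e => Cmod (mn e - RtoC (Rmin (Re (a e)) (Re (b e))))
        + (Cmod (a e - RtoC (Cmod (r e))) + Cmod (b e - RtoC (Cmod (s e)))))); auto.
    lra. apply negl_plus; auto. apply negl_plus; auto. lra.
    intros e He. rewrite cinv1. facts r s a b mx mn e.
    destruct H5 as [? [? [E|E]]]; rewrite E in *; lra. }
  assert (Pmns : in_principal K s mn).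
  { apply (divgen K mn s 0 1 1 (fun e => Cmod (mn e - RtoC (Rmin (Re (a e)) (Re (b e))))
        + (Cmod (a e - RtoC (Cmod (r e))) + Cmod (b e - RtoC (Cmod (s e)))))); auto.
    lra. apply negl_plus; auto. apply negl_plus; auto. lra.
    intros e He. rewrite cinv1. facts r s a b mx mn e.
    destruct H5 as [? [? [E|E]]]; rewrite E in *; lra. }
  destruct Pr as [w1 [Hw1 Ew1]], Ps as [w2 [Hw2 Ew2]], Par as [u [Hu Eu]], Pbs as [v [Hv Ev]].
  destruct PAmx as [w3 [Hw3 Ew3]], PmxA as [w4 [Hw4 Ew4]].
  destruct Pmnr as [w5 [Hw5 Ew5]], Pmns as [w6 [Hw6 Ew6]].
  split; [split|].
  - split.
    + apply sum_to_princ with w1 w2; auto.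
    + apply princ_to_sum with u v; auto.
  - split.
    + apply princ_trans with w3; auto.
    + apply princ_trans with w4; auto.
  - split.
    + intros [[c [Hc Ec]] [d [Hd Ed]]].
      destruct (EMsm_modc K c Hc) as [Nc [Mc [ec [Hec Bc]]]].
      destruct (EMsm_modc K d Hd) as [Nd [Md [ed [Hed Bd]]]].
      assert (N1 := neg_negl _ _ Ec). assert (N2 := neg_negl _ _ Ed). simpl in N1, N2.
      apply (divgen K x mn (Nc + Nd) (Rabs Mc + Rabs Md) (Rmin ec ed)
        (fun e => Cmod (x e - r e * c e) + Cmod (x e - s e * d e) +
           (Cmod (mn e - RtoC (Rmin (Re (a e)) (Re (b e)))) + (Cmod (a e - RtoC (Cmod (r e))) + Cmod (b e - RtoC (Cmod (s e)))))
           * ((Rabs Mc + Rabs Md) * / e ^ (Nc + Nd)))); auto.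
      * pose proof (Rabs_pos Mc). pose proof (Rabs_pos Md). lra.
      * apply negl_plus. apply negl_plus; auto. apply negl_mod.
        apply negl_plus; auto. apply negl_plus; auto.
        apply modr_mult. apply modr_const. apply modr_invpow.
      * split. apply Rmin_glb_lt; lra. apply Rle_trans with ec. apply Rmin_l. lra.
      * intros e He. assert (He1 : e <= ec) by (apply Rle_trans with (Rmin ec ed); [lra | apply Rmin_l]).
        assert (He2 : e <= ed) by (apply Rle_trans with (Rmin ec ed); [lra | apply Rmin_r]).
        specialize (Bc e ltac:(lra)). specialize (Bd e ltac:(lra)).
        destruct (bnd_mono e Mc Md Nc Nd ltac:(lra)) as [Bm1 Bm2].
        set (B := (Rabs Mc + Rabs Md) * / e ^ (Nc + Nd)) in *.
        assert (HB0 : 0 <= B) by (unfold B; apply Rmult_le_pos; [pose proof (Rabs_pos Mc); pose proof (Rabs_pos Md); lra | apply Rlt_le, Rinv_0_lt_compat, pow_lt; lra]).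
        rewrite Rabs_right in Bc, Bd by (apply Rle_ge, Cmod_ge_0).
        assert (Xc : Cmod (x e) <= Cmod (x e - r e * c e) + Cmod (r e) * B).
        { replace (x e) with ((x e - r e * c e) + r e * c e)%C at 1 by ring.
          eapply Rle_trans. apply Cmod_triangle. rewrite Cmod_mult.
          apply Rplus_le_compat_l. apply Rmult_le_compat_l. apply Cmod_ge_0. lra. }
        assert (Xd : Cmod (x e) <= Cmod (x e - s e * d e) + Cmod (s e) * B).
        { replace (x e) with ((x e - s e * d e) + s e * d e)%C at 1 by ring.
          eapply Rle_trans. apply Cmod_triangle. rewrite Cmod_mult.
          apply Rplus_le_compat_l. apply Rmult_le_compat_l. apply Cmod_ge_0. lra. }
        pose proof (Cmod_ge_0 (x e - r e * c e)). pose proof (Cmod_ge_0 (x e - s e * d e)).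
        facts r s a b mx mn e.
        set (n3 := Cmod (mn e - RtoC (Rmin (Re (a e)) (Re (b e)))) + (Cmod (a e - RtoC (Cmod (r e))) + Cmod (b e - RtoC (Cmod (s e))))).
        destruct (Rle_dec (Cmod (r e)) (Cmod (s e))) as [Crs | Crs].
        -- assert (Cmod (r e) <= Cmod (mn e) + n3) by (unfold n3; destruct H8 as [? [? [E|E]]]; rewrite E in *; lra).
           assert (B * Cmod (r e) <= B * (Cmod (mn e) + n3)) by (apply Rmult_le_compat_l; auto).
           lra.
        -- assert (Cmod (s e) <= Cmod (mn e) + n3) by (unfold n3; destruct H8 as [? [? [E|E]]]; rewrite E in *; lra).
           assert (B * Cmod (s e) <= B * (Cmod (mn e) + n3)) by (apply Rmult_le_compat_l; auto).
           lra.
    + intros H. split.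
      * apply princ_trans with (g := mn) (w := w5); auto.
      * apply princ_trans with (g := mn) (w := w6); auto.
Qed.
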